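(* Let $s=\sigma+it$ with $-1/2\le\sigma<0$ and $t\ge 1$. Then there is a complex number $E(\sigma,t)$ with $$|E(\sigma,t)|\le\frac{\pi}{4}+\frac{1-2\sigma}{2}+\frac{18\sigma^2-18\sigma+19}{12t}$$ such that $$\pi^{s-1/2}\frac{\Gamma\left(\frac{1-s}{2}\right)}{\Gamma\left(\frac s2\right)}=\left(\frac{(1-\sigma)^2+t^2}{4}\right)^{-\sigma/4}\left(\frac{\sigma^2+t^2}{4}\right)^{(1-\sigma)/4}\pi^{\sigma-\frac12}\exp\Big(\sigma-\tfrac12+it\left(-\log t+\log(2\pi)+1\right)+E(\sigma,t)\Big).$$ *)

(* Defs.v *)
From Stdlib Require Import Reals Factorial ClassicalEpsilon.
From Coquelicot Require Import Coquelicot.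
Open Scope R_scope.

Definition Cexp (z : C) : C :=
  (exp (Re z) * cos (Im z), exp (Re z) * sin (Im z)).

Fixpoint rising_prod (z : C) (n : nat) : C :=
  match n with
  | O => z
  | S m => Cmult (rising_prod z m) (Cplus z (RtoC (INR (S m))))
  end.

Definition gauss_seq (z : C) (n : nat) : C :=
  Cdiv (Cmult (Cexp (Cmult z (RtoC (ln (INR n))))) (RtoC (INR (Factorial.fact n))))
       (rising_prod z n).

(** g is the value of the Gamma function at z (Gauss's limit formula,
    valid for every z not in {0,-1,-2,...}). *)
Definition is_Gamma (z g : C) : Prop :=
  filterlim (gauss_seq z) eventually (locally g).

(** The complex Gamma function (defined off the poles, where the limit exists). *)
Definition CGamma (z : C) : C :=
  epsilon (inhabits (RtoC 0)) (fun g => is_Gamma z g).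

(* Main.v *)
Require Import Defs.
From Stdlib Require Import Reals.
From Coquelicot Require Import Coquelicot.
From Stdlib Require Import Lra Lia Psatz ClassicalEpsilon Factorial.
Open Scope R_scope.

Lemma deriv_le0_mono (f f' : R -> R) (a b : R) :
  a <= b -> (forall x, a <= x <= b -> is_derive f x (f' x)) ->
  (forall x, a <= x <= b -> f' x <= 0) -> f b <= f a.
Proof.
  intros Hab Hd Hs. destruct (Req_dec a b) as [->|Hne]; [lra|].
  destruct (MVT_cor2 f f' a b) as [c [Hc1 Hc2]]; [lra| |].
  - intros c Hc. apply is_derive_Reals. apply Hd; lra.
  - assert (f' c <= 0) by (apply Hs; lra). nra.
Qed.

Lemma deriv_ge0_mono (f f' : R -> R) (a b : R) :
  a <= b -> (forall x, a <= x <= b -> is_derive f x (f' x)) ->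
  (forall x, a <= x <= b -> 0 <= f' x) -> f a <= f b.
Proof.
  intros Hab Hd Hs.
  assert (H := deriv_le0_mono (fun x => - f x) (fun x => - f' x) a b Hab).
  cbv beta in H. cut (- f b <= - f a); [lra|]. apply H.
  - intros x Hx. apply (is_derive_opp f x (f' x)). now apply Hd.
  - intros x Hx. specialize (Hs x Hx). lra.
Qed.

Lemma atan_le_id u : 0 <= u -> atan u <= u.
Proof.
  intros Hu.
  assert (H := deriv_le0_mono (fun x => atan x - x) (fun x => / (1 + x^2) - 1) 0 u Hu).
  cbv beta in H. rewrite atan_0 in H. cut (atan u - u <= 0 - 0); [lra|]. apply H.
  - intros x _. auto_derive; auto. field. try nra.
  - intros x _. assert (1 <= 1 + x^2) by nra.
    assert (/ (1 + x^2) <= 1).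
    { apply Rle_trans with (/ 1); [apply Rinv_le_contravar; lra | rewrite Rinv_1; lra]. } lra.
Qed.

Lemma atan_nonneg u : 0 <= u -> 0 <= atan u.
Proof.
  intros Hu.
  assert (H := deriv_ge0_mono atan (fun x => / (1 + x^2)) 0 u Hu).
  rewrite atan_0 in H. apply H.
  - intros x _. auto_derive; auto. field. try nra.
  - intros x _. apply Rlt_le, Rinv_0_lt_compat. nra.
Qed.

Lemma atan_ge_cub u : 0 <= u -> u - u^3/3 <= atan u.
Proof.
  intros Hu.
  assert (H := deriv_le0_mono (fun x => x - x^3/3 - atan x) (fun x => 1 - x^2 - / (1 + x^2)) 0 u Hu).
  cbv beta in H. rewrite atan_0 in H. cut (u - u^3/3 - atan u <= 0 - 0^3/3 - 0); [lra|]. apply H.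
  - intros x _. auto_derive; auto. field. try nra.
  - intros x _. assert (0 < 1 + x^2) by nra.
    assert (1 - x^2 - / (1 + x^2) = - (x^4) / (1 + x^2)) by (field; lra).
    rewrite H1. assert (0 <= x^4 / (1+x^2)). { apply Rdiv_le_0_compat; nra. }
    unfold Rdiv in *. lra.
Qed.

Lemma atan_err v : Rabs (atan v - v) <= Rabs v ^ 3 / 3.
Proof.
  destruct (Rle_lt_dec 0 v) as [Hv|Hv].
  - rewrite (Rabs_pos_eq v Hv). apply Rabs_le.
    assert (H1 := atan_le_id v Hv). assert (H2 := atan_ge_cub v Hv). lra.
  - rewrite (Rabs_left v Hv). assert (Hv' : 0 <= -v) by lra.
    assert (H1 := atan_le_id (-v) Hv'). assert (H2 := atan_ge_cub (-v) Hv').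
    rewrite atan_opp in H1, H2. apply Rabs_le. lra.
Qed.

Lemma ln_le_sub1 x : 0 < x -> ln x <= x - 1.
Proof.
  intros Hx. assert (H := exp_ineq1_le (x - 1)).
  rewrite <- (ln_exp (x - 1)). apply ln_le; lra.
Qed.

Lemma ln_ge_1sub x : 0 < x -> 1 - / x <= ln x.
Proof.
  intros Hx. assert (H := ln_le_sub1 (/ x) (Rinv_0_lt_compat _ Hx)).
  rewrite ln_Rinv in H by lra. lra.
Qed.

Lemma is_lim_seq_inv_n : is_lim_seq (fun n => / INR n) 0.
Proof.
  replace (Finite 0) with (Rbar_inv p_infty) by reflexivity.
  apply is_lim_seq_inv. apply is_lim_seq_INR. discriminate.
Qed.

Lemma conv_step (u : nat -> R) (C : R) :
  (forall n, (1 <= n)%nat -> Rabs (u (S n) - u n) <= C * (/ INR n - / INR (S n))) ->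
  exists L : R, is_lim_seq u L /\ forall n, (1 <= n)%nat -> Rabs (L - u n) <= C / INR n.
Proof.
  intros H.
  assert (HS : forall n, u (S (S n)) - u (S n) <= C * (/ INR (S n) - / INR (S (S n)))
           /\ - (C * (/ INR (S n) - / INR (S (S n)))) <= u (S (S n)) - u (S n)).
  { intros n. specialize (H (S n) ltac:(lia)). apply Rabs_le_between in H. lra. }
  set (v := fun n => u (S n) + C / INR (S n)).
  set (w := fun n => u (S n) - C / INR (S n)).
  assert (Hv : forall n, v (S n) <= v n).
  { intros n. unfold v. destruct (HS n). unfold Rdiv. lra. }
  assert (Hw : forall n, w n <= w (S n)).
  { intros n. unfold w. destruct (HS n). unfold Rdiv. lra. }
  assert (HC : 0 <= C).
  { destruct (HS O) as [A B]. simpl in A, B.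
    assert (E : / (1 + 1) < / 1).
    { apply Rinv_lt_contravar; lra. } nra. }
  assert (Hwv : forall n, w n <= v n).
  { intros n. unfold v, w. assert (0 <= C / INR (S n)).
    { apply Rdiv_le_0_compat; auto. apply lt_0_INR. lia. } lra. }
  assert (Hwinc : forall n, w 0%nat <= w n).
  { induction n; [lra|]. specialize (Hw n). lra. }
  destruct (ex_finite_lim_seq_decr v (w 0%nat) Hv) as [L HL].
  { intros n. specialize (Hwv n). specialize (Hwinc n). lra. }
  assert (Hinv : is_lim_seq (fun n => C / INR (S n)) 0).
  { replace (Finite 0) with (Rbar_mult C 0) by (simpl; f_equal; ring).
    apply is_lim_seq_scal_l.
    apply (is_lim_seq_incr_1 (fun n => / INR n) 0). apply is_lim_seq_inv_n. }
  assert (HuS : is_lim_seq (fun n => u (S n)) L).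
  { apply is_lim_seq_ext with (fun n => v n - C / INR (S n)).
    { intros n. unfold v. ring. }
    replace (Finite L) with (Rbar_minus L 0) by (simpl; f_equal; ring).
    apply is_lim_seq_minus'; auto. }
  assert (HwL : is_lim_seq w L).
  { replace (Finite L) with (Rbar_minus L 0) by (simpl; f_equal; ring).
    apply is_lim_seq_minus'; auto. }
  exists L. split.
  - apply is_lim_seq_incr_1. exact HuS.
  - intros n Hn. destruct n as [|m]; [lia|].
    assert (A1 := is_lim_seq_decr_compare v L HL Hv m).
    assert (A2 := is_lim_seq_incr_compare w L HwL Hw m).
    unfold v, w in *. apply Rabs_le_between. set (q := C / INR (S m)) in *. set (r := u (S m)) in *. split; lra.
Qed.

Lemma le_of_le_inv (x y K : R) :
  (forall n, (1 <= n)%nat -> x <= y + K / INR n) -> x <= y.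
Proof.
  intros H.
  assert (H0 : is_lim_seq (fun n => K * / INR n) 0).
  { replace (Finite 0) with (Rbar_mult K 0) by (simpl; f_equal; ring).
    apply is_lim_seq_scal_l. apply is_lim_seq_inv_n. }
  assert (Hl : is_lim_seq (fun n => y + K / INR n) y).
  { replace (Finite y) with (Finite (y + 0)) by (f_equal; ring).
    apply is_lim_seq_plus'. apply is_lim_seq_const. exact H0. }
  assert (Hle := is_lim_seq_le_loc (fun _ => x) (fun n => y + K / INR n) x y).
  simpl in Hle. apply Hle; auto.
  - exists 1%nat. intros n Hn. apply H. lia.
  - apply is_lim_seq_const.
Qed.


Lemma der_sp (g h : R -> R) (m s : R) :
  is_derive g (m + s) (h (m + s)) -> is_derive (fun s => g (m + s)) s (h (m + s)).
Proof.
  intros H. apply is_derive_Reals. apply is_derive_Reals in H.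
  replace (h (m+s)) with (h (m+s) * 1) by ring.
  apply (derivable_pt_lim_comp (fun s => m + s) g s 1 (h (m+s))).
  - apply is_derive_Reals. auto_derive; auto; ring.
  - exact H.
Qed.

Lemma der_sm (g h : R -> R) (m s : R) :
  is_derive g (m - s) (h (m - s)) -> is_derive (fun s => g (m - s)) s (- h (m - s)).
Proof.
  intros H. apply is_derive_Reals. apply is_derive_Reals in H.
  replace (- h (m-s)) with (h (m-s) * (-1)) by ring.
  apply (derivable_pt_lim_comp (fun s => m - s) g s (-1) (h (m-s))).
  - apply is_derive_Reals. auto_derive; auto; ring.
  - exact H.
Qed.

Lemma der_minus (f g : R -> R) x a b :
  is_derive f x a -> is_derive g x b -> is_derive (fun x => f x - g x) x (a - b).
Proof.
  intros Ha Hb. apply is_derive_Reals. apply is_derive_Reals in Ha, Hb.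
  exact (derivable_pt_lim_minus f g x a b Ha Hb).
Qed.

Lemma der_plus (f g : R -> R) x a b :
  is_derive f x a -> is_derive g x b -> is_derive (fun x => f x + g x) x (a + b).
Proof.
  intros Ha Hb. apply is_derive_Reals. apply is_derive_Reals in Ha, Hb.
  exact (derivable_pt_lim_plus f g x a b Ha Hb).
Qed.

Lemma der_opp (f : R -> R) x a :
  is_derive f x a -> is_derive (fun x => - f x) x (- a).
Proof.
  intros Ha. apply is_derive_Reals. apply is_derive_Reals in Ha.
  exact (derivable_pt_lim_opp f x a Ha).
Qed.

Lemma midpoint_up (F f g h : R -> R) (m M : R) :
  (forall x, m-1 <= x <= m+1 -> is_derive F x (f x)) ->
  (forall x, m-1 <= x <= m+1 -> is_derive f x (g x)) ->
  (forall x, m-1 <= x <= m+1 -> is_derive g x (h x)) ->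
  (forall x, m-1 <= x <= m+1 -> h x <= M) ->
  F (m+1) - F (m-1) - 2 * f m <= M / 3.
Proof.
  intros HF Hf Hg Hh.
  assert (Hchi : forall s, 0 <= s <= 1 -> g (m+s) - g (m-s) - 2*M*s <= 0).
  { intros s Hs.
    assert (H := deriv_le0_mono (fun s => g (m+s) - g (m-s) - 2*M*s)
                   (fun s => h (m+s) + h (m-s) - 2*M) 0 s (proj1 Hs)).
    cbv beta in H. replace (m+0) with m in H by ring. replace (m-0) with m in H by ring.
    cut (g (m + s) - g (m - s) - 2 * M * s <= g m - g m - 2 * M * 0); [lra|].
    apply H.
    - intros x Hx. apply der_minus. 2: { auto_derive; auto. ring. }
      replace (h (m+x) + h (m-x)) with (h (m+x) - (- h (m-x))) by ring.
      apply der_minus. apply der_sp. apply Hg; lra. apply der_sm. apply Hg; lra.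
    - intros x Hx. assert (h (m+x) <= M) by (apply Hh; lra).
      assert (h (m-x) <= M) by (apply Hh; lra). lra. }
  assert (Hpsi : forall s, 0 <= s <= 1 -> f (m+s) + f (m-s) - 2 * f m - M * s^2 <= 0).
  { intros s Hs.
    assert (H := deriv_le0_mono (fun s => f (m+s) + f (m-s) - 2 * f m - M * s^2)
                   (fun s => g (m+s) - g (m-s) - 2*M*s) 0 s (proj1 Hs)).
    cbv beta in H. replace (m+0) with m in H by ring. replace (m-0) with m in H by ring.
    cut (f (m + s) + f (m - s) - 2 * f m - M * s^2 <= f m + f m - 2 * f m - M * 0^2); [lra|].
    apply H.
    - intros x Hx. apply der_minus. 2: { auto_derive; auto. ring. }
      replace (g (m+x) - g (m-x)) with ((g (m+x) + (- g (m-x))) - 0) by ring.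
      apply der_minus. 2: { auto_derive; auto. }
      apply der_plus. apply der_sp. apply Hf; lra. apply der_sm. apply Hf; lra.
    - intros x Hx. apply Hchi. lra. }
  assert (H := deriv_le0_mono (fun s => F (m+s) - F (m-s) - 2 * s * f m - M * s^3 / 3)
                   (fun s => f (m+s) + f (m-s) - 2 * f m - M * s^2) 0 1 ltac:(lra)).
  cbv beta in H. replace (m+0) with m in H by ring. replace (m-0) with m in H by ring.
  cut (F (m + 1) - F (m - 1) - 2 * 1 * f m - M * 1^3 / 3 <= F m - F m - 2 * 0 * f m - M * 0^3/3); [lra|].
  apply H.
  - intros x Hx. apply der_minus. 2: { auto_derive; auto. field. }
    apply der_minus. 2: { auto_derive; auto. ring. }
    replace (f (m+x) + f (m-x)) with (f (m+x) - (- f (m-x))) by ring.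
    apply der_minus. apply der_sp. apply HF; lra. apply der_sm. apply HF; lra.
  - intros x Hx. apply Hpsi. lra.
Qed.

Lemma midpoint (F f g h : R -> R) (m M : R) :
  (forall x, m-1 <= x <= m+1 -> is_derive F x (f x)) ->
  (forall x, m-1 <= x <= m+1 -> is_derive f x (g x)) ->
  (forall x, m-1 <= x <= m+1 -> is_derive g x (h x)) ->
  (forall x, m-1 <= x <= m+1 -> Rabs (h x) <= M) ->
  Rabs (f m - (F (m+1) - F (m-1)) / 2) <= M / 6.
Proof.
  intros HF Hf Hg Hh.
  assert (U := midpoint_up F f g h m M HF Hf Hg ltac:(intros x Hx; specialize (Hh x Hx); apply Rabs_le_between in Hh; lra)).
  assert (L := midpoint_up (fun x => - F x) (fun x => - f x) (fun x => - g x) (fun x => - h x) m M).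
  cbv beta in L.
  assert (L' : - F (m + 1) - - F (m - 1) - 2 * - f m <= M / 3).
  { apply L.
    - intros x Hx. apply der_opp. now apply HF.
    - intros x Hx. apply der_opp. now apply Hf.
    - intros x Hx. apply der_opp. now apply Hg.
    - intros x Hx. specialize (Hh x Hx). apply Rabs_le_between in Hh. lra. }
  apply Rabs_le_between. split; lra.
Qed.


Definition polar (r th : R) : C := (r * cos th, r * sin th).

Lemma Cexp_polar x y : Cexp (x, y) = polar (exp x) y.
Proof. reflexivity. Qed.

Lemma polar_mult r1 a r2 b : Cmult (polar r1 a) (polar r2 b) = polar (r1 * r2) (a + b).
Proof.
  unfold polar, Cmult; simpl. rewrite cos_plus, sin_plus. f_equal; ring.
Qed.

Lemma polar_div r1 a r2 b : 0 < r2 -> Cdiv (polar r1 a) (polar r2 b) = polar (r1 / r2) (a - b).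
Proof.
  intros Hr. unfold polar, Cdiv, Cinv, Cmult; simpl. rewrite cos_minus, sin_minus.
  assert (Hs := sin2_cos2 b). unfold Rsqr in Hs.
  assert (E : r2 * cos b * (r2 * cos b * 1) + r2 * sin b * (r2 * sin b * 1) = r2 * r2).
  { transitivity (r2 * r2 * (sin b * sin b + cos b * cos b)); [ring|]. rewrite Hs. ring. }
  rewrite E. f_equal; field; lra.
Qed.

Lemma RtoC_polar r : RtoC r = polar r 0.
Proof. unfold polar, RtoC. rewrite cos_0, sin_0. f_equal; ring. Qed.

Lemma ln_sqrt' x : 0 < x -> ln (sqrt x) = ln x / 2.
Proof.
  intros Hx. assert (Hs : 0 < sqrt x) by (apply sqrt_lt_R0; lra).
  assert (E : ln x = ln (sqrt x) + ln (sqrt x)).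
  { rewrite <- ln_mult by lra. now rewrite sqrt_sqrt by lra. }
  lra.
Qed.

Lemma point_polar x b : 0 < x -> ((x, b) : C) = polar (sqrt (x^2 + b^2)) (atan (b / x)).
Proof.
  intros Hx. unfold polar. rewrite cos_atan, sin_atan. unfold Rsqr.
  set (c := 1 + b / x * (b / x)).
  assert (Hc : 0 < c) by (unfold c; nra).
  assert (E : sqrt (x^2 + b^2) = x * sqrt c).
  { replace (x^2 + b^2) with (x^2 * c) by (unfold c; field; lra).
    rewrite sqrt_mult_alt by nra. rewrite <- Rsqr_pow2, sqrt_Rsqr; lra. }
  rewrite E. assert (0 < sqrt c) by (apply sqrt_lt_R0; lra).
  f_equal; field; lra.
Qed.

Fixpoint rp_mod (a b : R) (n : nat) : R :=
  match n with
  | O => sqrt (a^2 + b^2)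
  | S m => rp_mod a b m * sqrt ((a + INR (S m))^2 + b^2)
  end.

Fixpoint rp_arg (a b th0 : R) (n : nat) : R :=
  match n with
  | O => th0
  | S m => rp_arg a b th0 m + atan (b / (a + INR (S m)))
  end.

Lemma rp_mod_pos a b n : -1 < a -> b <> 0 -> 0 < rp_mod a b n.
Proof.
  intros Ha Hb. induction n as [|n IH]; simpl rp_mod.
  - apply sqrt_lt_R0. assert (0 < b^2) by (apply pow2_gt_0; auto).
    apply Rplus_le_lt_0_compat; [apply pow2_ge_0 | assumption].
  - apply Rmult_lt_0_compat; auto. apply sqrt_lt_R0.
    assert (0 < b^2) by (apply pow2_gt_0; auto).
    apply Rplus_le_lt_0_compat; [apply pow2_ge_0 | assumption].
Qed.

Lemma rising_polar a b th0 n :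
  -1 < a -> ((a, b) : C) = polar (sqrt (a^2 + b^2)) th0 ->
  rising_prod (a, b) n = polar (rp_mod a b n) (rp_arg a b th0 n).
Proof.
  intros Ha H0. induction n as [|n IH]; cbn [rising_prod rp_mod rp_arg].
  - exact H0.
  - rewrite IH.
    assert (Hp : Cplus (a, b) (RtoC (INR (S n))) = ((a + INR (S n), b) : C)).
    { unfold Cplus, RtoC; simpl. f_equal; ring. }
    rewrite Hp. rewrite point_polar.
    + rewrite polar_mult. reflexivity.
    + assert (0 <= INR n) by apply pos_INR. rewrite S_INR. lra.
Qed.

Definition LM (a b : R) (n : nat) : R :=
  a * ln (INR n) + ln (INR (fact n)) - ln (rp_mod a b n).
Definition ANG (a b th0 : R) (n : nat) : R :=
  b * ln (INR n) - rp_arg a b th0 n.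

Lemma gauss_polar a b th0 n :
  -1 < a -> b <> 0 -> ((a, b) : C) = polar (sqrt (a^2 + b^2)) th0 ->
  gauss_seq (a, b) n = polar (exp (LM a b n)) (ANG a b th0 n).
Proof.
  intros Ha Hb H0. unfold gauss_seq. rewrite (rising_polar a b th0 n Ha H0).
  assert (E1 : Cexp (Cmult (a, b) (RtoC (ln (INR n)))) = polar (exp (a * ln (INR n))) (b * ln (INR n))).
  { unfold Cmult, RtoC; simpl. rewrite Cexp_polar. f_equal; [f_equal|]; ring. }
  rewrite E1, RtoC_polar, polar_mult, polar_div by (apply rp_mod_pos; auto).
  unfold LM, ANG. f_equal; [|ring].
  unfold Rminus.   rewrite !exp_plus, exp_Ropp, exp_ln by (apply INR_fact_lt_0).
  rewrite exp_ln by (apply rp_mod_pos; auto). field.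
  apply Rgt_not_eq, rp_mod_pos; auto.
Qed.


Lemma ln_ratio_bounds x : 0 < x -> / (x+1) <= ln (x+1) - ln x <= / x.
Proof.
  intros Hx. rewrite <- ln_div by lra.
  assert (H1 := ln_le_sub1 ((x+1)/x) ltac:(apply Rdiv_lt_0_compat; lra)).
  assert (H2 := ln_ge_1sub ((x+1)/x) ltac:(apply Rdiv_lt_0_compat; lra)).
  replace ((x+1)/x - 1) with (/x) in H1 by (field; lra).
  replace (1 - / ((x+1)/x)) with (/(x+1)) in H2 by (field; lra). lra.
Qed.

Lemma inv_sq_le x : 1 <= x -> / ((x+1)^2) <= / x - / (x+1).
Proof.
  intros Hx. replace (/ x - / (x+1)) with (/ (x * (x+1))) by (field; lra).
  apply Rinv_le_contravar; nra.
Qed.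

Lemma mod_step_bound a b x : -1 < a -> 1 <= x ->
  Rabs (a * (ln (x+1) - ln x) + (ln (x+1) - ln ((a + (x+1))^2 + b^2) / 2))
  <= (Rabs a + 2 * (2*Rabs a + a^2 + b^2)^2 + (a^2+b^2)/2) * (/ x - / (x+1)).
Proof.
  intros Ha Hx. set (m := x + 1). assert (Hm : 2 <= m) by (unfold m; lra).
  set (K := 2*Rabs a + a^2 + b^2).
  assert (Hd := ln_ratio_bounds x ltac:(lra)). fold m in Hd.
  assert (HD : 0 <= / x - / m) by lra.
  assert (P1 : Rabs (a * (ln m - ln x) - a / m) <= Rabs a * (/ x - / m)).
  { replace (a * (ln m - ln x) - a / m) with (a * (ln m - ln x - / m)) by (unfold Rdiv; ring).
    rewrite Rabs_mult. apply Rmult_le_compat_l; [apply Rabs_pos|].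
    apply Rabs_le_between. lra. }
  assert (Ham : m / 2 <= a + m) by lra.
  assert (Hm0 : 0 < m) by lra.
  set (q := ((a+m)^2 + b^2) / m^2).
  assert (Hq : / 4 <= q).
  { unfold q. apply Rmult_le_reg_r with (m^2); [nra|].
    unfold Rdiv. rewrite Rmult_assoc, Rinv_l by nra. nra. }
  assert (Hq0 : 0 < q) by lra.
  assert (Eln : ln m - ln ((a + m)^2 + b^2) / 2 = - ln q / 2).
  { unfold q. rewrite ln_div by nra. replace (m^2) with (m*m) by ring.
    rewrite ln_mult by lra. field. }
  set (y := q - 1).
  assert (Ey : y = (2*a*m + a^2 + b^2) / m^2) by (unfold y, q; field; lra).
  assert (Hlq : 0 <= y - ln q <= 4 * y^2).
  { assert (H1 := ln_le_sub1 q Hq0). assert (H2 := ln_ge_1sub q Hq0).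
    split; [unfold y; lra|].
    assert (E : y - (1 - / q) = y^2 / q) by (unfold y; field; lra).
    assert (y^2 / q <= 4 * y^2).
    { unfold Rdiv. assert (/ q <= 4).
      { replace 4 with (/ / 4) by (field). apply Rinv_le_contravar; lra. }
      assert (0 <= y^2) by nra. nra. }
    lra. }
  assert (HK0 : 0 <= K) by (unfold K; assert (0 <= Rabs a) by apply Rabs_pos; nra).
  assert (Hy : Rabs y <= K / m).
  { rewrite Ey. unfold Rdiv. rewrite Rabs_mult, Rabs_inv, (Rabs_pos_eq (m^2)) by nra.
    assert (Ha1 : Rabs (2 * a * m + a^2 + b^2) <= K * m).
    { replace (2 * a * m + a^2 + b^2) with (2 * a * m + (a^2 + b^2)) by ring.
      eapply Rle_trans; [apply Rabs_triang|].
      rewrite (Rabs_pos_eq (a^2+b^2)) by nra.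
      rewrite !Rabs_mult, (Rabs_pos_eq 2), (Rabs_pos_eq m) by lra.
      unfold K. assert (0 <= Rabs a) by apply Rabs_pos. nra. }
    apply Rle_trans with (K * m * / m^2).
    - apply Rmult_le_compat_r; [|exact Ha1]. apply Rlt_le, Rinv_0_lt_compat. nra.
    - right. field. lra. }
  assert (Hy2 : y^2 <= K^2 / m^2).
  { replace (K^2/m^2) with ((K/m)^2) by (field; lra).
    rewrite <- pow2_abs. assert (0 <= Rabs y) by apply Rabs_pos. nra. }
  assert (P2 : Rabs (ln m - ln ((a + m)^2 + b^2) / 2 + a / m)
              <= (2 * K^2 + (a^2+b^2)/2) / m^2).
  { rewrite Eln.
    replace (- ln q / 2 + a / m) with ((y - ln q) / 2 - (a^2+b^2) / (2 * m^2))
      by (rewrite Ey; field; lra).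
    apply Rabs_le_between.
    assert (0 <= (a^2+b^2) / (2 * m^2)) by (apply Rdiv_le_0_compat; nra).
    assert (E2 : (2 * K^2 + (a^2+b^2)/2) / m^2 = 2 * (K^2/m^2) + (a^2+b^2)/(2*m^2)) by (field; lra).
    rewrite E2. split; lra. }
  assert (Hmm : / m^2 <= / x - / m) by (apply inv_sq_le; lra).
  assert (P2' : Rabs (ln m - ln ((a + m)^2 + b^2) / 2 + a / m)
              <= (2 * K^2 + (a^2+b^2)/2) * (/ x - / m)).
  { eapply Rle_trans; [exact P2|]. unfold Rdiv. apply Rmult_le_compat_l; [|exact Hmm].
    assert (0 <= K^2) by nra. nra. }
  replace (a * (ln m - ln x) + (ln m - ln ((a + m) ^ 2 + b ^ 2) / 2))
    with ((a * (ln m - ln x) - a / m) + (ln m - ln ((a + m)^2 + b^2) / 2 + a / m)) by ring.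
  eapply Rle_trans; [apply Rabs_triang|].
  replace ((Rabs a + 2 * K ^ 2 + (a ^ 2 + b ^ 2) / 2) * (/ x - / m))
    with (Rabs a * (/ x - / m) + (2 * K^2 + (a^2+b^2)/2) * (/ x - / m)) by ring.
  apply Rplus_le_compat; assumption.
Qed.

Lemma ang_step_bound a b x : -1 < a -> 1 <= x ->
  Rabs (b * (ln (x+1) - ln x) - atan (b / (a + (x+1))))
  <= (Rabs b + 2 * Rabs a * Rabs b + 3 * Rabs b ^ 3) * (/ x - / (x+1)).
Proof.
  intros Ha Hx. set (m := x + 1). assert (Hm : 2 <= m) by (unfold m; lra).
  assert (Hd := ln_ratio_bounds x ltac:(lra)). fold m in Hd.
  assert (HD : 0 <= / x - / m) by lra.
  assert (Hmm : / m^2 <= / x - / m) by (apply inv_sq_le; lra).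
  assert (Ham : m / 2 <= a + m) by lra.
  assert (Hb0 : 0 <= Rabs b) by apply Rabs_pos.
  assert (Ha0 : 0 <= Rabs a) by apply Rabs_pos.
  set (v := b / (a + m)).
  assert (P1 : Rabs (b * (ln m - ln x - / m)) <= Rabs b * (/ x - / m)).
  { rewrite Rabs_mult. apply Rmult_le_compat_l; [apply Rabs_pos|].
    apply Rabs_le_between. lra. }
  assert (P2 : Rabs (b / m - v) <= 2 * Rabs a * Rabs b * / m^2).
  { unfold v. replace (b / m - b / (a + m)) with (a * b * / (m * (a + m))) by (field; lra).
    rewrite !Rabs_mult, Rabs_inv, (Rabs_pos_eq (m * (a+m))) by nra.
    assert (/ (m * (a + m)) <= 2 * / m^2).
    { replace (2 * / m^2) with (/ (m * (m / 2))) by (field; lra).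
      apply Rinv_le_contravar; nra. }
    assert (0 <= Rabs a * Rabs b) by nra. nra. }
  assert (Hv : Rabs v <= 2 * Rabs b / m).
  { unfold v. unfold Rdiv. rewrite Rabs_mult, Rabs_inv, (Rabs_pos_eq (a+m)) by lra.
    assert (/ (a + m) <= 2 * / m).
    { replace (2 * / m) with (/ (m / 2)) by (field; lra). apply Rinv_le_contravar; lra. }
    nra. }
  assert (P3 : Rabs (v - atan v) <= 3 * Rabs b ^ 3 * / m^2).
  { rewrite Rabs_minus_sym. eapply Rle_trans; [apply atan_err|].
    assert (Hv0 : 0 <= Rabs v) by apply Rabs_pos.
    assert (E : Rabs v ^ 3 <= (2 * Rabs b / m)^3) by (apply pow_incr; lra).
    assert (E2 : (2 * Rabs b / m)^3 = 8 * Rabs b ^ 3 * / m^2 * / m) by (field; lra).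
    assert (E3 : / m <= 1) by (replace 1 with (/1) by field; apply Rinv_le_contravar; lra).
    assert (0 <= Rabs b ^ 3 * / m^2).
    { apply Rmult_le_pos; [apply pow_le; lra| apply Rlt_le, Rinv_0_lt_compat; nra]. }
    assert (0 < / m) by (apply Rinv_0_lt_compat; lra).
    nra. }
  replace (b * (ln m - ln x) - atan v)
    with (b * (ln m - ln x - / m) + (b / m - v) + (v - atan v)) by (unfold Rdiv; ring).
  eapply Rle_trans; [apply Rabs_triang|].
  eapply Rle_trans; [apply Rplus_le_compat_r, Rabs_triang|].
  assert (0 <= Rabs a * Rabs b) by nra.
  assert (0 <= Rabs b ^ 3) by (apply pow_le; lra).
  nra.
Qed.

Lemma LM_diff a b n : -1 < a -> b <> 0 ->
  LM a b (S n) - LM a b n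
  = a * (ln (INR n + 1) - ln (INR n)) + (ln (INR n + 1) - ln ((a + (INR n + 1))^2 + b^2) / 2).
Proof.
  intros Ha Hb. unfold LM. cbn [rp_mod]. rewrite fact_simpl, mult_INR, S_INR.
  assert (0 <= INR n) by apply pos_INR.
  rewrite ln_mult by (try lra; apply INR_fact_lt_0).
  rewrite ln_mult by (try (apply rp_mod_pos; auto); apply sqrt_lt_R0;
    assert (0 < b^2) by (apply pow2_gt_0; auto); nra).
  rewrite ln_sqrt' by (assert (0 < b^2) by (apply pow2_gt_0; auto); nra).
  ring.
Qed.

Lemma ANG_diff a b th0 n :
  ANG a b th0 (S n) - ANG a b th0 n
  = b * (ln (INR n + 1) - ln (INR n)) - atan (b / (a + (INR n + 1))).
Proof.
  unfold ANG. cbn [rp_arg]. rewrite S_INR. ring.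
Qed.


Lemma LM_conv a b : -1 < a -> b <> 0 ->
  exists L : R, is_lim_seq (LM a b) L /\ exists C, forall n, (1 <= n)%nat -> Rabs (L - LM a b n) <= C / INR n.
Proof.
  intros Ha Hb.
  destruct (conv_step (LM a b) (Rabs a + 2 * (2*Rabs a + a^2 + b^2)^2 + (a^2+b^2)/2)) as [L [HL HB]].
  - intros n Hn. rewrite LM_diff by auto. rewrite S_INR. apply mod_step_bound; auto.
    apply (le_INR 1 n) in Hn. simpl in Hn. lra.
  - exists L. split; auto. eexists; exact HB.
Qed.

Lemma ANG_conv a b th0 : -1 < a ->
  exists L : R, is_lim_seq (ANG a b th0) L /\ exists C, forall n, (1 <= n)%nat -> Rabs (L - ANG a b th0 n) <= C / INR n.
Proof.
  intros Ha.
  destruct (conv_step (ANG a b th0) (Rabs b + 2 * Rabs a * Rabs b + 3 * Rabs b ^ 3)) as [L [HL HB]].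
  - intros n Hn. rewrite ANG_diff. rewrite S_INR. apply ang_step_bound; auto.
    apply (le_INR 1 n) in Hn. simpl in Hn. lra.
  - exists L. split; auto. eexists; exact HB.
Qed.

Lemma lim_C (p q : nat -> R) (P Q : R) :
  is_lim_seq p P -> is_lim_seq q Q ->
  filterlim (fun n => ((p n, q n) : C)) eventually (locally ((P, Q) : C)).
Proof.
  intros Hp Hq S [eps HS].
  assert (E1 := Hp _ (locally_ball P eps)).
  assert (E2 := Hq _ (locally_ball Q eps)).
  destruct E1 as [N1 H1]. destruct E2 as [N2 H2].
  exists (max N1 N2). intros n Hn. apply HS. split.
  - apply H1. lia.
  - apply H2. lia.
Qed.

Lemma is_Gamma_polar a b th0 (L1 L2 : R) : -1 < a -> b <> 0 ->
  ((a, b) : C) = polar (sqrt (a^2 + b^2)) th0 ->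
  is_lim_seq (LM a b) L1 -> is_lim_seq (ANG a b th0) L2 ->
  is_Gamma (a, b) (polar (exp L1) L2).
Proof.
  intros Ha Hb H0 H1 H2. unfold is_Gamma.
  apply filterlim_ext_loc with (fun n => polar (exp (LM a b n)) (ANG a b th0 n)).
  { exists 1%nat. intros n Hn. symmetry. apply gauss_polar; auto. }
  unfold polar. apply lim_C.
  - apply is_lim_seq_mult'.
    + apply (is_lim_seq_continuous exp). apply derivable_continuous_pt, derivable_pt_exp. exact H1.
    + apply (is_lim_seq_continuous cos). apply continuity_cos. exact H2.
  - apply is_lim_seq_mult'.
    + apply (is_lim_seq_continuous exp). apply derivable_continuous_pt, derivable_pt_exp. exact H1.
    + apply (is_lim_seq_continuous sin). apply continuity_sin. exact H2.
Qed.

Lemma CGamma_eq z g : is_Gamma z g -> CGamma z = g.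
Proof.
  intros H. unfold CGamma.
  assert (He : is_Gamma z (epsilon (inhabits (RtoC 0)) (fun g => is_Gamma z g))).
  { apply epsilon_spec. exists g. exact H. }
  unfold is_Gamma in *.
  exact (filterlim_locally_unique (gauss_seq z) _ _ He H).
Qed.


Definition f1 t x := ln (t^2 + x^2).
Definition PP t x := x * ln (t^2 + x^2) - 2 * x + 2 * t * atan (x / t).
Definition f2 t x := atan (x / t).
Definition QQ t x := x * atan (x / t) - t / 2 * ln (t^2 + x^2).
Definition hh t x := / (t^2 + x^2).
Definition HH t x := atan (x / t) / t.
Definition e1 t m := f1 t m - (PP t (m+1) - PP t (m-1)) / 2.
Definition e2 t m := f2 t m - (QQ t (m+1) - QQ t (m-1)) / 2.

Fixpoint gsum (f : nat -> R) (n : nat) : R :=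
  match n with O => f O | S k => gsum f k + f (S k) end.

Ltac neqs := repeat split; intro; nra.

Section Der.
Variable t : R.
Hypothesis Ht : 1 <= t.

Lemma tx_pos x : 0 < t^2 + x^2.
Proof. nra. Qed.

Lemma d_PP x : is_derive (PP t) x (f1 t x).
Proof.
  unfold PP, f1. assert (H := tx_pos x).
  auto_derive. { repeat split; lra. }
  replace (t * (t * 1) + x * (x * 1)) with (t^2 + x^2) by ring.
  field. repeat split; intro; nra.
Qed.

Lemma d_f1 x : is_derive (f1 t) x (2 * x / (t^2 + x^2)).
Proof.
  unfold f1. assert (H := tx_pos x).
  auto_derive. { lra. }
  field. neqs.
Qed.

Lemma d_f1' x : is_derive (fun x => 2 * x / (t^2 + x^2)) x (2 * (t^2 - x^2) / (t^2 + x^2)^2).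
Proof.
  assert (H := tx_pos x).
  auto_derive. { neqs. }
  field. neqs.
Qed.

Lemma d_QQ x : is_derive (QQ t) x (f2 t x).
Proof.
  unfold QQ, f2. assert (H := tx_pos x).
  auto_derive. { repeat split; lra. }
  unfold Rdiv. field. neqs.
Qed.

Lemma d_f2 x : is_derive (f2 t) x (t / (t^2 + x^2)).
Proof.
  unfold f2. assert (H := tx_pos x).
  auto_derive. { lra. }
  field. neqs.
Qed.

Lemma d_f2' x : is_derive (fun x => t / (t^2 + x^2)) x (- 2 * t * x / (t^2 + x^2)^2).
Proof.
  assert (H := tx_pos x).
  auto_derive. { neqs. }
  field. neqs.
Qed.

Lemma d_HH x : is_derive (HH t) x (hh t x).
Proof.
  unfold HH, hh. assert (H := tx_pos x).
  auto_derive. { lra. }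
  field. neqs.
Qed.

End Der.

Lemma e1_bound t m B : 1 <= t -> (forall x, m-1 <= x <= m+1 -> hh t x <= B) ->
  Rabs (e1 t m) <= B / 3.
Proof.
  intros Ht HB. unfold e1.
  replace (B / 3) with ((2 * B) / 6) by field.
  apply (midpoint (PP t) (f1 t) (fun x => 2 * x / (t^2 + x^2))
                  (fun x => 2 * (t^2 - x^2) / (t^2 + x^2)^2)).
  - intros x _. apply d_PP; auto.
  - intros x _. apply d_f1; auto.
  - intros x _. apply d_f1'; auto.
  - intros x Hx. specialize (HB x Hx). unfold hh in HB.
    assert (HD := tx_pos t Ht x).
    assert (E : Rabs (2 * (t^2 - x^2) / (t^2 + x^2)^2) <= 2 * / (t^2 + x^2)).
    { unfold Rdiv. rewrite Rabs_mult, Rabs_mult, Rabs_inv, (Rabs_pos_eq 2), (Rabs_pos_eq ((t^2+x^2)^2)) by nra.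
      replace (/ (t^2 + x^2)) with ((t^2+x^2) * / (t^2+x^2)^2) by (field; lra).
      assert (Rabs (t^2 - x^2) <= t^2 + x^2) by (apply Rabs_le; nra).
      assert (0 < / (t^2+x^2)^2) by (apply Rinv_0_lt_compat; nra). nra. }
    lra.
Qed.

Lemma e2_bound t m B : 1 <= t -> (forall x, m-1 <= x <= m+1 -> hh t x <= B) ->
  Rabs (e2 t m) <= B / 6.
Proof.
  intros Ht HB. unfold e2.
  apply (midpoint (QQ t) (f2 t) (fun x => t / (t^2 + x^2))
                  (fun x => - 2 * t * x / (t^2 + x^2)^2)).
  - intros x _. apply d_QQ; auto.
  - intros x _. apply d_f2; auto.
  - intros x _. apply d_f2'; auto.
  - intros x Hx. specialize (HB x Hx). unfold hh in HB.
    assert (HD := tx_pos t Ht x).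
    assert (E : Rabs (- 2 * t * x / (t^2 + x^2)^2) <= / (t^2 + x^2)).
    { unfold Rdiv. rewrite Rabs_mult, Rabs_inv, (Rabs_pos_eq ((t^2+x^2)^2)) by nra.
      replace (/ (t^2 + x^2)) with ((t^2+x^2) * / (t^2+x^2)^2) by (field; lra).
      assert (Rabs (- 2 * t * x) <= t^2 + x^2).
      { assert (0 <= (t+x)^2) by apply pow2_ge_0. assert (0 <= (t-x)^2) by apply pow2_ge_0. apply Rabs_le. split; nra. }
      assert (0 < / (t^2+x^2)^2) by (apply Rinv_0_lt_compat; nra). nra. }
    lra.
Qed.

Lemma hh_le_t2 t x : 1 <= t -> hh t x <= / t^2.
Proof.
  intros Ht. unfold hh. apply Rinv_le_contravar; nra.
Qed.

Lemma hh_mono t p x : 1 <= t -> 0 <= p -> p <= x -> hh t x <= hh t p.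
Proof.
  intros Ht Hp Hx. unfold hh. apply Rinv_le_contravar; nra.
Qed.

Lemma hh_tele t p : 1 <= t -> 2 <= p -> hh t p <= (HH t p - HH t (p - 2)) / 2.
Proof.
  intros Ht Hp.
  assert (H := deriv_ge0_mono (fun x => HH t x - x * hh t p) (fun x => hh t x - hh t p) (p-2) p ltac:(lra)).
  cbv beta in H.
  assert (HH t (p - 2) - (p - 2) * hh t p <= HH t p - p * hh t p).
  { apply H.
    - intros x _. apply der_minus. apply d_HH; auto.
      replace (hh t p) with (1 * hh t p) at 2 by ring.
      auto_derive; auto. ring.
    - intros x Hx. assert (hh t p <= hh t x) by (apply hh_mono; lra). lra. }
  lra.
Qed.

Lemma HH_bounds t x : 1 <= t -> 0 <= x -> 0 <= HH t x <= PI / (2 * t).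
Proof.
  intros Ht Hx. unfold HH.
  assert (0 <= atan (x / t)) by (apply atan_nonneg; apply Rdiv_le_0_compat; lra).
  assert (H2 := atan_bound (x / t)).
  split.
  - apply Rdiv_le_0_compat; lra.
  - replace (PI / (2 * t)) with ((PI / 2) / t) by (field; lra).
    apply Rmult_le_compat_r; [apply Rlt_le, Rinv_0_lt_compat; lra|]. lra.
Qed.


Lemma gridX (e : R -> R) (w s t : R) : 1 <= t -> -1/2 <= s < 0 -> 0 <= w ->
  (forall m B, (forall x, m-1 <= x <= m+1 -> hh t x <= B) -> Rabs (e m) <= w * B) ->
  forall n, Rabs (gsum (fun k => e (s + 2 * INR k)) n) <= w * (2 / t^2 + PI / (4 * t)).
Proof.
  intros Ht Hs Hw He.
  assert (Ht2 : 0 < / t^2) by (apply Rinv_0_lt_compat; nra).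
  assert (Hpt : 0 < PI / (4 * t)) by (apply Rdiv_lt_0_compat; [apply PI_RGT_0 | lra]).
  assert (Hb : forall m, Rabs (e m) <= w * / t^2).
  { intros m. apply He. intros x _. apply hh_le_t2; auto. }
  assert (Str : forall n, Rabs (gsum (fun k => e (s + 2 * INR k)) (S n))
                  <= w * (2 / t^2 + (HH t (s + 2 * INR (S n) - 1) - HH t (s + 1)) / 2)).
  { induction n as [|n IH].
    - cbn [gsum]. simpl INR.
      replace (s + 2 * 1 - 1) with (s + 1) by ring.
      eapply Rle_trans; [apply Rabs_triang|].
      assert (A1 := Hb (s + 2 * 0)). assert (A2 := Hb (s + 2 * 1)).
      replace (w * (2 / t^2 + (HH t (s + 1) - HH t (s + 1)) / 2)) with (w * / t^2 + w * / t^2) by (field; lra).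
      lra.
    - cbn [gsum]. cbn [gsum] in IH.
      eapply Rle_trans; [apply Rabs_triang|].
      set (p := s + 2 * INR (S n) + 1).
      assert (Hp : 2 <= p).
      { unfold p. rewrite S_INR. assert (0 <= INR n) by apply pos_INR. lra. }
      assert (A : Rabs (e (s + 2 * INR (S (S n)))) <= w * ((HH t p - HH t (p - 2)) / 2)).
      { apply He. intros x Hx.
        assert (hh t x <= hh t p).
        { apply hh_mono; auto; try lra. unfold p in *. rewrite (S_INR (S n)) in Hx. lra. }
        assert (hh t p <= (HH t p - HH t (p - 2)) / 2) by (apply hh_tele; auto). lra. }
      replace (p - 2) with (s + 2 * INR (S n) - 1) in A by (unfold p; ring).
      replace (s + 2 * INR (S (S n)) - 1) with p by (unfold p; rewrite (S_INR (S n)); ring).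
      lra. }
  intros n. destruct n as [|n].
  - cbn [gsum]. eapply Rle_trans; [apply Hb|].
    apply Rmult_le_compat_l; auto. unfold Rdiv. lra.
  - eapply Rle_trans; [apply Str|]. apply Rmult_le_compat_l; auto.
    assert (B1 := HH_bounds t (s + 2 * INR (S n) - 1) Ht
                   ltac:(rewrite S_INR; assert (0 <= INR n) by apply pos_INR; lra)).
    assert (B2 := HH_bounds t (s + 1) Ht ltac:(lra)).
    replace (PI / (4 * t)) with ((PI / (2 * t)) / 2) by (field; lra). unfold Rdiv in *. lra.
Qed.

Lemma gridY (e : R -> R) (w s t : R) : 1 <= t -> -1/2 <= s < 0 -> 0 <= w ->
  (forall m B, (forall x, m-1 <= x <= m+1 -> hh t x <= B) -> Rabs (e m) <= w * B) ->
  forall n, Rabs (gsum (fun k => e (1 - s + 2 * INR k)) n) <= w * (1 / t^2 + PI / (4 * t)).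
Proof.
  intros Ht Hs Hw He.
  assert (Ht2 : 0 < / t^2) by (apply Rinv_0_lt_compat; nra).
  assert (Hb : forall m, Rabs (e m) <= w * / t^2).
  { intros m. apply He. intros x _. apply hh_le_t2; auto. }
  assert (Str : forall n, Rabs (gsum (fun k => e (1 - s + 2 * INR k)) n)
                  <= w * (1 / t^2 + (HH t (2 * INR n - s) - HH t (- s)) / 2)).
  { induction n as [|n IH].
    - cbn [gsum]. simpl INR. replace (2 * 0 - s) with (- s) by ring.
      replace (w * (1 / t^2 + (HH t (- s) - HH t (- s)) / 2)) with (w * / t^2) by (field; lra).
      apply Hb.
    - cbn [gsum].
      eapply Rle_trans; [apply Rabs_triang|].
      set (p := 2 * INR (S n) - s).
      assert (Hp : 2 <= p).
      { unfold p. rewrite S_INR. assert (0 <= INR n) by apply pos_INR. lra. }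
      assert (A : Rabs (e (1 - s + 2 * INR (S n))) <= w * ((HH t p - HH t (p - 2)) / 2)).
      { apply He. intros x Hx.
        assert (hh t x <= hh t p).
        { apply hh_mono; auto; try lra. unfold p in *. lra. }
        assert (hh t p <= (HH t p - HH t (p - 2)) / 2) by (apply hh_tele; auto). lra. }
      replace (p - 2) with (2 * INR n - s) in A by (unfold p; rewrite S_INR; ring).
      lra. }
  intros n. eapply Rle_trans; [apply Str|]. apply Rmult_le_compat_l; auto.
  assert (B1 := HH_bounds t (2 * INR n - s) Ht
                 ltac:(assert (0 <= INR n) by apply pos_INR; lra)).
  assert (B2 := HH_bounds t (- s) Ht ltac:(lra)).
  replace (PI / (4 * t)) with ((PI / (2 * t)) / 2) by (field; lra). unfold Rdiv in *. lra.
Qed.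


Lemma hlog t c x b : 1 <= t -> b^2 = (t/2)^2 ->
  ln (sqrt ((c/2 + x)^2 + b^2)) = f1 t (c + 2 * x) / 2 - ln 2.
Proof.
  intros Ht Hb. unfold f1. rewrite Hb.
  assert (0 <= (c + 2*x)^2) by apply pow2_ge_0. assert (Hp : 0 < t^2 + (c + 2*x)^2) by nra.
  replace ((c/2 + x)^2 + (t/2)^2) with ((t^2 + (c + 2*x)^2) / 4) by field.
  rewrite ln_sqrt' by lra. rewrite ln_div by lra.
  replace 4 with (2 * 2) by ring. rewrite ln_mult by lra. field.
Qed.

Ltac sidepos := first [ apply rp_mod_pos; auto
  | apply sqrt_lt_R0; apply Rplus_le_lt_0_compat; [apply pow2_ge_0 | apply pow2_gt_0; lra] ].

Lemma mod_identity s t n : 1 <= t -> -1/2 <= s < 0 ->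
  ln (rp_mod (s/2) (t/2) n) - ln (rp_mod ((1-s)/2) (-(t/2)) n)
  = (PP t (s + 2 * INR n + 1) - PP t (s - 1)) / 4
    - (PP t (1 - s + 2 * INR n + 1) - PP t (- s)) / 4
    + (gsum (fun k => e1 t (s + 2 * INR k)) n - gsum (fun k => e1 t (1 - s + 2 * INR k)) n) / 2.
Proof.
  intros Ht Hs.
  assert (Hb1 : (t/2)^2 = (t/2)^2) by reflexivity.
  assert (Hb2 : (-(t/2))^2 = (t/2)^2) by ring.
  assert (Ha1 : -1 < s/2) by lra. assert (Ha2 : -1 < (1-s)/2) by lra.
  assert (Hbz1 : t/2 <> 0) by lra. assert (Hbz2 : -(t/2) <> 0) by lra.
  induction n as [|n IH].
  - cbn [rp_mod gsum]. simpl INR.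
    replace ((s/2)^2 + (t/2)^2) with ((s/2 + 0)^2 + (t/2)^2) by ring.
    replace (((1-s)/2)^2 + (-(t/2))^2) with (((1-s)/2 + 0)^2 + (-(t/2))^2) by ring.
    rewrite (hlog t s 0 (t/2)) by auto. rewrite (hlog t (1-s) 0 (-(t/2))) by auto.
    unfold e1. replace (s + 2 * 0) with s by ring. replace (1 - s + 2 * 0) with (1 - s) by ring.
    replace (1 - s + 2 * 0 + 1) with (1 - s + 1) by ring.
    replace (s + 2 * 0 + 1) with (s + 1) by ring.
    replace (1 - s - 1) with (- s) by ring. field.
  - cbn [rp_mod gsum].
    rewrite ln_mult by sidepos.
    rewrite ln_mult by sidepos.
    rewrite (hlog t s (INR (S n)) (t/2)) by auto.
    rewrite (hlog t (1-s) (INR (S n)) (-(t/2))) by auto.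
    unfold e1 at 2 4. rewrite S_INR in *.
    replace (s + 2 * (INR n + 1) - 1) with (s + 2 * INR n + 1) by ring.
    replace (1 - s + 2 * (INR n + 1) - 1) with (1 - s + 2 * INR n + 1) by ring.
    replace (s + 2 * (INR n + 1) + 1) with (s + 2 * (INR n + 1) + 1) by ring.
    lra.
Qed.

Lemma atan_half t c x : 1 <= t -> 0 < c + 2 * x ->
  atan ((t/2) / (c/2 + x)) = PI / 2 - f2 t (c + 2 * x).
Proof.
  intros Ht Hc. unfold f2. rewrite <- atan_inv by (apply Rdiv_lt_0_compat; lra).
  f_equal. field. split; lra.
Qed.

Lemma atan_half_neg t c x : 1 <= t -> 0 < c + 2 * x ->
  atan ((-(t/2)) / (c/2 + x)) = - (PI / 2 - f2 t (c + 2 * x)).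
Proof.
  intros Ht Hc. rewrite <- atan_half by auto. rewrite <- atan_opp. f_equal. field. lra.
Qed.

Lemma arg_identity s t n : 1 <= t -> -1/2 <= s < 0 ->
  rp_arg (s/2) (t/2) (PI/2 - atan (s/t)) n
  - rp_arg ((1-s)/2) (-(t/2)) (atan ((-(t/2)) / ((1-s)/2))) n
  = PI * (INR n + 1)
    - (QQ t (s + 2 * INR n + 1) - QQ t (s - 1)) / 2
    - (QQ t (1 - s + 2 * INR n + 1) - QQ t (- s)) / 2
    - (gsum (fun k => e2 t (s + 2 * INR k)) n + gsum (fun k => e2 t (1 - s + 2 * INR k)) n).
Proof.
  intros Ht Hs.
  induction n as [|n IH].
  - cbn [rp_arg gsum]. simpl INR.
    replace ((1-s)/2) with ((1-s)/2 + 0) by ring.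
    rewrite atan_half_neg by lra.
    unfold e2. replace (s + 2 * 0) with s by ring. replace (1 - s + 2 * 0) with (1 - s) by ring.
    replace (1 - s + 2 * 0 + 1) with (1 - s + 1) by ring.
    replace (s + 2 * 0 + 1) with (s + 1) by ring.
    replace (1 - s - 1) with (- s) by ring. unfold f2. field.
  - cbn [rp_arg gsum].
    assert (0 <= INR n) by apply pos_INR.
    rewrite (atan_half t s (INR (S n))) by (auto; rewrite S_INR; lra).
    rewrite (atan_half_neg t (1-s) (INR (S n))) by (auto; rewrite S_INR; lra).
    unfold e2 at 2 4. rewrite S_INR in *.
    replace (s + 2 * (INR n + 1) - 1) with (s + 2 * INR n + 1) by ring.
    replace (1 - s + 2 * (INR n + 1) - 1) with (1 - s + 2 * INR n + 1) by ring.
    lra.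
Qed.


Lemma lnratio_bound t x X : 1 <= t -> 1 <= x -> 2*x + 1/2 <= X <= 2*x + 5/2 ->
  0 <= ln ((t^2 + X^2) / (4 * x^2)) <= (t^2 + 17) / (4 * x).
Proof.
  intros Ht Hx HX.
  assert (Hd : 0 < 4 * x^2) by nra.
  assert (Hr : 1 <= (t^2 + X^2) / (4 * x^2)).
  { apply Rmult_le_reg_r with (4 * x^2); auto. unfold Rdiv.
    rewrite Rmult_assoc, Rinv_l, Rmult_1_r by lra. nra. }
  split.
  - rewrite <- ln_1. apply ln_le; lra.
  - eapply Rle_trans; [apply ln_le_sub1; lra|].
    replace ((t^2 + X^2) / (4 * x^2) - 1) with ((t^2 + X^2 - 4 * x^2) / (4 * x^2)) by (field; lra).
    replace ((t^2 + 17) / (4 * x)) with (((t^2 + 17) * x) / (4 * x^2)) by (field; lra).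
    unfold Rdiv. apply Rmult_le_compat_r; [apply Rlt_le, Rinv_0_lt_compat; lra|].
    nra.
Qed.

Lemma asym_mod s t x : 1 <= t -> -1/2 <= s < 0 -> 1 <= x ->
  Rabs ((1/2 - s) * ln x + (PP t (s + 2*x + 1) - PP t (1 - s + 2*x + 1)) / 4 - (s - 1/2) * ln 2)
  <= (t^2 + 17) / (8 * x).
Proof.
  intros Ht Hs Hx.
  destruct (MVT_cor2 (PP t) (f1 t) (s + 2*x + 1) (1 - s + 2*x + 1)) as [xi [Hxi Hxi2]]; [lra| |].
  { intros c _. apply is_derive_Reals. apply d_PP; auto. }
  assert (HL := lnratio_bound t x xi Ht Hx ltac:(lra)).
  assert (E : (1/2 - s) * ln x + (PP t (s + 2*x + 1) - PP t (1 - s + 2*x + 1)) / 4 - (s - 1/2) * ln 2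
             = - ((1/2 - s) / 2) * ln ((t^2 + xi^2) / (4 * x^2))).
  { replace (PP t (s + 2*x + 1) - PP t (1 - s + 2*x + 1)) with (- (f1 t xi * (1 - s + 2*x + 1 - (s + 2*x + 1)))) by lra.
    unfold f1. rewrite ln_div by nra. replace (4 * x^2) with (2 * 2 * (x * x)) by ring.
    rewrite !ln_mult by nra. field. }
  rewrite E. rewrite Rabs_mult. rewrite Rabs_Ropp, Rabs_pos_eq by lra. rewrite Rabs_pos_eq by lra.
  replace ((t^2 + 17) / (8 * x)) with ((1/2) * ((t^2 + 17) / (4 * x))) by (field; lra).
  apply Rmult_le_compat; lra.
Qed.

Lemma xatan_bound t X : 1 <= t -> 0 < X -> - (t^3 / (3 * X^2)) <= X * atan (t / X) - t <= 0.
Proof.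
  intros Ht HX.
  assert (Hu : 0 <= t / X) by (apply Rdiv_le_0_compat; lra).
  assert (A1 := atan_le_id (t/X) Hu). assert (A2 := atan_ge_cub (t/X) Hu).
  set (u := t / X) in *.
  assert (Et : t = X * u) by (unfold u; field; lra).
  assert (Et3 : t^3 / (3 * X^2) = X * (u^3 / 3)) by (rewrite Et; field; lra).
  rewrite Et3. rewrite Et at 2.
  assert (P1 : X * (atan u - u) <= 0) by (apply Rmult_le_0_l; lra).
  assert (P2 : X * (- (u^3/3)) <= X * (atan u - u)) by (apply Rmult_le_compat_l; lra).
  split; lra.
Qed.

Lemma QQ_expand t X x : 1 <= t -> 0 < X -> 0 < x ->
  QQ t X = PI * X / 2 - t - (X * atan (t / X) - t) - t / 2 * ln ((t^2 + X^2) / (4 * x^2))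
           - t * ln 2 - t * ln x.
Proof.
  intros Ht HX Hx. unfold QQ.
  assert (E : atan (X / t) = PI / 2 - atan (t / X)).
  { rewrite <- atan_inv by (apply Rdiv_lt_0_compat; lra). f_equal. field. split; lra. }
  rewrite E. rewrite ln_div by nra. replace (4 * x^2) with (2 * 2 * (x * x)) by ring.
  rewrite !ln_mult by nra. field.
Qed.

Lemma asym_arg s t x : 1 <= t -> -1/2 <= s < 0 -> 1 <= x ->
  Rabs (- t * ln x + PI * (x + 1) - (QQ t (s + 2*x + 1) + QQ t (1 - s + 2*x + 1)) / 2
        - (PI / 4 + t + t * ln 2))
  <= (t^3 / 12 + t * (t^2 + 17) / 8) / x.
Proof.
  intros Ht Hs Hx.
  set (X1 := s + 2*x + 1). set (X2 := 1 - s + 2*x + 1).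
  assert (H1 : 0 < X1) by (unfold X1; lra). assert (H2 : 0 < X2) by (unfold X2; lra).
  rewrite (QQ_expand t X1 x), (QQ_expand t X2 x) by lra.
  assert (L1 := lnratio_bound t x X1 Ht Hx ltac:(unfold X1; lra)).
  assert (L2 := lnratio_bound t x X2 Ht Hx ltac:(unfold X2; lra)).
  assert (B1 := xatan_bound t X1 Ht H1). assert (B2 := xatan_bound t X2 Ht H2).
  set (l1 := ln ((t^2 + X1^2) / (4 * x^2))) in *.
  set (l2 := ln ((t^2 + X2^2) / (4 * x^2))) in *.
  set (a1 := X1 * atan (t / X1) - t) in *.
  set (a2 := X2 * atan (t / X2) - t) in *.
  assert (E : - t * ln x + PI * (x + 1)
     - (PI * X1 / 2 - t - a1 - t / 2 * l1 - t * ln 2 - t * ln x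
        + (PI * X2 / 2 - t - a2 - t / 2 * l2 - t * ln 2 - t * ln x)) / 2
     - (PI / 4 + t + t * ln 2) = (a1 + a2) / 2 + t / 4 * (l1 + l2)).
  { unfold X1, X2. field. }
  rewrite E.
  assert (C1 : t^3 / (3 * X1^2) <= t^3 / 12 / x).
  { replace (t^3 / 12 / x) with (t^3 / (3 * (4 * x))) by (field; lra).
    unfold Rdiv. apply Rmult_le_compat_l; [nra|]. apply Rinv_le_contravar; [nra|].
    unfold X1. nra. }
  assert (C2 : t^3 / (3 * X2^2) <= t^3 / 12 / x).
  { replace (t^3 / 12 / x) with (t^3 / (3 * (4 * x))) by (field; lra).
    unfold Rdiv. apply Rmult_le_compat_l; [nra|]. apply Rinv_le_contravar; [nra|].
    unfold X2. nra. }
  assert (C3 : t / 4 * (l1 + l2) <= t * (t^2 + 17) / 8 / x).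
  { replace (t * (t^2 + 17) / 8 / x) with (t / 4 * (2 * ((t^2 + 17) / (4 * x)))) by (field; lra).
    apply Rmult_le_compat_l; lra. }
  assert (C4 : 0 <= t / 4 * (l1 + l2)) by (apply Rmult_le_pos; lra).
  replace ((t^3 / 12 + t * (t^2 + 17) / 8) / x) with (t^3 / 12 / x + t * (t^2 + 17) / 8 / x) by (field; lra).
  apply Rabs_le. split; lra.
Qed.


Lemma Rabs_sub_le a b : Rabs (a - b) <= Rabs a + Rabs b.
Proof. unfold Rminus. eapply Rle_trans; [apply Rabs_triang|]. rewrite Rabs_Ropp. lra. Qed.

Lemma abs_le_lim (x al K : R) : (forall n, (1 <= n)%nat -> Rabs x <= al + K / INR n) -> Rabs x <= al.
Proof. intros H. apply (le_of_le_inv _ _ K). exact H. Qed.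

Lemma e1_w t : 1 <= t -> forall m B, (forall x, m-1 <= x <= m+1 -> hh t x <= B) -> Rabs (e1 t m) <= (1/3) * B.
Proof. intros Ht m B HB. replace ((1/3) * B) with (B / 3) by field. apply e1_bound; auto. Qed.

Lemma e2_w t : 1 <= t -> forall m B, (forall x, m-1 <= x <= m+1 -> hh t x <= B) -> Rabs (e2 t m) <= (1/6) * B.
Proof. intros Ht m B HB. replace ((1/6) * B) with (B / 6) by field. apply e2_bound; auto. Qed.

Lemma main_mod s t (Lz Lw Cz Cw : R) : 1 <= t -> -1/2 <= s < 0 ->
  (forall n, (1 <= n)%nat -> Rabs (Lz - LM (s/2) (t/2) n) <= Cz / INR n) ->
  (forall n, (1 <= n)%nat -> Rabs (Lw - LM ((1-s)/2) (-(t/2)) n) <= Cw / INR n) ->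
  Rabs ((Lw - Lz) - ((s - 1/2) * ln 2 + (PP t (- s) - PP t (s - 1)) / 4))
  <= (3 / t^2 + PI / (2 * t)) / 6.
Proof.
  intros Ht Hs Hz Hw. apply (abs_le_lim _ _ (Cz + Cw + (t^2 + 17) / 8)).
  intros n Hn. specialize (Hz n Hn). specialize (Hw n Hn).
  assert (Hx : 1 <= INR n) by (apply (le_INR 1 n) in Hn; simpl in Hn; lra).
  set (x := INR n) in *.
  assert (ED : LM ((1-s)/2) (-(t/2)) n - LM (s/2) (t/2) n
               = (1/2 - s) * ln x + (ln (rp_mod (s/2) (t/2) n) - ln (rp_mod ((1-s)/2) (-(t/2)) n))).
  { unfold LM. fold x. field. }
  rewrite mod_identity in ED by auto.
  fold x in ED.
  assert (GX := gridX (e1 t) (1/3) s t Ht Hs ltac:(lra) (e1_w t Ht) n).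
  assert (GY := gridY (e1 t) (1/3) s t Ht Hs ltac:(lra) (e1_w t Ht) n).
  assert (AS := asym_mod s t x Ht Hs Hx).
  set (gx := gsum (fun k => e1 t (s + 2 * INR k)) n) in *.
  set (gy := gsum (fun k => e1 t (1 - s + 2 * INR k)) n) in *.
  set (Dn := LM ((1-s)/2) (-(t/2)) n - LM (s/2) (t/2) n) in *.
  replace ((Lw - Lz) - ((s - 1/2) * ln 2 + (PP t (- s) - PP t (s - 1)) / 4))
    with ((Lw - LM ((1-s)/2) (-(t/2)) n) - (Lz - LM (s/2) (t/2) n)
          + ((1/2 - s) * ln x + (PP t (s + 2*x + 1) - PP t (1 - s + 2*x + 1)) / 4 - (s - 1/2) * ln 2)
          + (gx - gy) / 2)
    by (unfold Dn in ED; lra).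
  assert (HG : Rabs ((gx - gy) / 2) <= (3 / t^2 + PI / (2 * t)) / 6).
  { unfold Rdiv at 1. rewrite Rabs_mult, (Rabs_pos_eq (/2)) by lra.
    assert (Rabs (gx - gy) <= Rabs gx + Rabs gy).
    { unfold Rminus. eapply Rle_trans; [apply Rabs_triang|]. rewrite Rabs_Ropp. lra. }
    replace ((3 / t^2 + PI / (2 * t)) / 6) with (((1/3) * (2 / t^2 + PI / (4 * t)) + (1/3) * (1 / t^2 + PI / (4 * t))) * / 2)
      by (field; lra).
    apply Rmult_le_compat_r; lra. }
  eapply Rle_trans; [apply Rabs_triang|].
  eapply Rle_trans; [apply Rplus_le_compat_r, Rabs_triang|].
  eapply Rle_trans; [apply Rplus_le_compat_r, Rplus_le_compat_r, Rabs_sub_le|].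
  assert (Esum : (Cz + Cw + (t^2+17)/8) / x = Cz/x + Cw/x + (t^2+17)/8/x) by (field; lra).
  rewrite Esum. replace ((t^2 + 17) / (8 * x)) with ((t^2 + 17) / 8 / x) in AS by (field; lra). lra.
Qed.

Lemma main_arg s t (Lz Lw Cz Cw : R) : 1 <= t -> -1/2 <= s < 0 ->
  (forall n, (1 <= n)%nat -> Rabs (Lz - ANG (s/2) (t/2) (PI/2 - atan (s/t)) n) <= Cz / INR n) ->
  (forall n, (1 <= n)%nat -> Rabs (Lw - ANG ((1-s)/2) (-(t/2)) (atan ((-(t/2)) / ((1-s)/2))) n) <= Cw / INR n) ->
  Rabs ((Lw - Lz) - (PI / 4 + t + t * ln 2 + (QQ t (s - 1) + QQ t (- s)) / 2))
  <= (3 / t^2 + PI / (2 * t)) / 6.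
Proof.
  intros Ht Hs Hz Hw. apply (abs_le_lim _ _ (Cz + Cw + (t^3 / 12 + t * (t^2 + 17) / 8))).
  intros n Hn. specialize (Hz n Hn). specialize (Hw n Hn).
  assert (Hx : 1 <= INR n) by (apply (le_INR 1 n) in Hn; simpl in Hn; lra).
  set (x := INR n) in *.
  assert (ED : ANG ((1-s)/2) (-(t/2)) (atan ((-(t/2)) / ((1-s)/2))) n - ANG (s/2) (t/2) (PI/2 - atan (s/t)) n
               = - t * ln x + (rp_arg (s/2) (t/2) (PI/2 - atan (s/t)) n
                               - rp_arg ((1-s)/2) (-(t/2)) (atan ((-(t/2)) / ((1-s)/2))) n)).
  { unfold ANG. fold x. field. }
  rewrite arg_identity in ED by auto.
  fold x in ED.
  assert (GX := gridX (e2 t) (1/6) s t Ht Hs ltac:(lra) (e2_w t Ht) n).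
  assert (GY := gridY (e2 t) (1/6) s t Ht Hs ltac:(lra) (e2_w t Ht) n).
  assert (AS := asym_arg s t x Ht Hs Hx).
  set (gx := gsum (fun k => e2 t (s + 2 * INR k)) n) in *.
  set (gy := gsum (fun k => e2 t (1 - s + 2 * INR k)) n) in *.
  set (Dn := ANG ((1-s)/2) (-(t/2)) (atan ((-(t/2)) / ((1-s)/2))) n - ANG (s/2) (t/2) (PI/2 - atan (s/t)) n) in *.
  replace ((Lw - Lz) - (PI / 4 + t + t * ln 2 + (QQ t (s - 1) + QQ t (- s)) / 2))
    with ((Lw - ANG ((1-s)/2) (-(t/2)) (atan ((-(t/2)) / ((1-s)/2))) n)
          - (Lz - ANG (s/2) (t/2) (PI/2 - atan (s/t)) n)
          + (- t * ln x + PI * (x + 1) - (QQ t (s + 2*x + 1) + QQ t (1 - s + 2*x + 1)) / 2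
             - (PI / 4 + t + t * ln 2))
          - (gx + gy))
    by (unfold Dn in ED; lra).
  assert (HG : Rabs (gx + gy) <= (3 / t^2 + PI / (2 * t)) / 6).
  { eapply Rle_trans; [apply Rabs_triang|].
    replace ((3 / t^2 + PI / (2 * t)) / 6) with ((1/6) * (2 / t^2 + PI / (4 * t)) + (1/6) * (1 / t^2 + PI / (4 * t)))
      by (field; lra). lra. }
  eapply Rle_trans; [apply Rabs_sub_le|].
  eapply Rle_trans; [apply Rplus_le_compat_r, Rabs_triang|].
  eapply Rle_trans; [apply Rplus_le_compat_r, Rplus_le_compat_r, Rabs_sub_le|].
  assert (Esum : (Cz + Cw + (t^3 / 12 + t * (t^2 + 17) / 8)) / x
                 = Cz/x + Cw/x + (t^3 / 12 + t * (t^2 + 17) / 8)/x) by (field; lra).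
  rewrite Esum. lra.
Qed.



Lemma D1_bound s t : 1 <= t -> -1/2 <= s < 0 ->
  - (((1 - s)^3 + (-s)^3) / (6 * t^2)) <= s - 1/2 + t / 2 * (atan ((1 - s) / t) + atan ((- s) / t)) <= 0.
Proof.
  intros Ht Hs.
  assert (H1 : forall c, 0 <= c -> c / 2 - c^3 / (6 * t^2) <= t / 2 * atan (c / t) <= c / 2).
  { intros c Hc. assert (Hu : 0 <= c / t) by (apply Rdiv_le_0_compat; lra).
    assert (A1 := atan_le_id (c/t) Hu). assert (A2 := atan_ge_cub (c/t) Hu).
    assert (E1 : c / 2 = t / 2 * (c / t)) by (field; lra).
    assert (E2 : c / 2 - c^3 / (6 * t^2) = t / 2 * (c / t - (c/t)^3 / 3)) by (field; lra).
    rewrite E1 at 2. rewrite E2.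
    split; apply Rmult_le_compat_l; lra. }
  assert (B1 := H1 (1 - s) ltac:(lra)). assert (B2 := H1 (- s) ltac:(lra)).
  unfold Rdiv in *. split; nra.
Qed.

Lemma D2_bound s t : 1 <= t -> -1/2 <= s < 0 ->
  0 <= (ln (t^2 + (1 - s)^2) - ln (t^2 + s^2)) / 4 <= (1 - 2 * s) / (4 * t^2).
Proof.
  intros Ht Hs.
  assert (P0 : 0 < t^2 + s^2) by nra.
  rewrite <- ln_div by nra.
  assert (Hr : 1 <= (t^2 + (1 - s)^2) / (t^2 + s^2)).
  { apply Rmult_le_reg_r with (t^2 + s^2); auto. unfold Rdiv.
    rewrite Rmult_assoc, Rinv_l, Rmult_1_r by lra. nra. }
  split.
  - assert (0 <= ln ((t^2 + (1 - s)^2) / (t^2 + s^2))) by (rewrite <- ln_1; apply ln_le; lra). lra.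
  - assert (H := ln_le_sub1 ((t^2 + (1 - s)^2) / (t^2 + s^2)) ltac:(lra)).
    replace ((t^2 + (1 - s)^2) / (t^2 + s^2) - 1) with ((1 - 2 * s) / (t^2 + s^2)) in H by (field; lra).
    assert ((1 - 2 * s) / (t^2 + s^2) <= (1 - 2 * s) / t^2).
    { unfold Rdiv. apply Rmult_le_compat_l; [lra|]. apply Rinv_le_contravar; nra. }
    replace ((1 - 2 * s) / (4 * t^2)) with (((1 - 2 * s) / t^2) / 4) by (field; lra). lra.
Qed.

Lemma lnt_bound t c : 1 <= t -> 0 <= ln (t^2 + c^2) - 2 * ln t <= c^2 / t^2.
Proof.
  intros Ht. replace (2 * ln t) with (ln (t^2)) by (replace (t^2) with (t*t) by ring; rewrite ln_mult by lra; ring).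
  assert (0 <= c^2) by apply pow2_ge_0.
  rewrite <- ln_div by nra.
  assert (Hr : 1 <= (t^2 + c^2) / t^2).
  { replace ((t^2 + c^2) / t^2) with (1 + c^2 / t^2) by (field; lra).
    assert (0 <= c^2 / t^2) by (apply Rdiv_le_0_compat; nra). lra. }
  split.
  - rewrite <- ln_1; apply ln_le; lra.
  - eapply Rle_trans; [apply ln_le_sub1; lra|]. right. field. lra.
Qed.

Lemma XY_bound s t : 1 <= t -> -1/2 <= s < 0 ->
  Rabs (((1 - s) * atan ((1 - s) / t) + (- s) * atan ((- s) / t)) / 2
        - t / 4 * (ln (t^2 + (1 - s)^2) - 2 * ln t) - t / 4 * (ln (t^2 + s^2) - 2 * ln t))
  <= ((1 - s)^2 + s^2) / (2 * t).
Proof.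
  intros Ht Hs.
  assert (H1 : forall c, 0 <= c -> 0 <= c * atan (c / t) <= c^2 / t).
  { intros c Hc. assert (Hu : 0 <= c / t) by (apply Rdiv_le_0_compat; lra).
    assert (A1 := atan_le_id (c/t) Hu). assert (A3 := atan_nonneg (c/t) Hu).
    replace (c^2 / t) with (c * (c / t)) by (field; lra). split; nra. }
  assert (B1 := H1 (1 - s) ltac:(lra)). assert (B2 := H1 (- s) ltac:(lra)).
  assert (L1 := lnt_bound t (1 - s) Ht). assert (L0 := lnt_bound t s Ht).
  assert (E1 : t / 4 * ((1 - s)^2 / t^2) = (1 - s)^2 / (4 * t)) by (field; lra).
  assert (E0 : t / 4 * (s^2 / t^2) = s^2 / (4 * t)) by (field; lra).
  assert (F1 : 0 <= t / 4 * (ln (t^2 + (1 - s)^2) - 2 * ln t) <= (1 - s)^2 / (4 * t)).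
  { rewrite <- E1. split; [apply Rmult_le_pos; lra | apply Rmult_le_compat_l; lra]. }
  assert (F0 : 0 <= t / 4 * (ln (t^2 + s^2) - 2 * ln t) <= s^2 / (4 * t)).
  { rewrite <- E0. split; [apply Rmult_le_pos; lra | apply Rmult_le_compat_l; lra]. }
  replace ((- s)^2) with (s^2) in B2 by ring.
  assert (G : ((1 - s)^2 + s^2) / (2 * t) = ((1-s)^2 / t + s^2 / t) / 2) by (field; lra).
  assert (G2 : (1 - s)^2 / (4 * t) + s^2 / (4 * t) <= ((1-s)^2 / t + s^2 / t) / 2).
  { assert (0 <= (1-s)^2 / t) by (apply Rdiv_le_0_compat; nra).
    assert (0 <= s^2 / t) by (apply Rdiv_le_0_compat; nra).
    replace ((1 - s)^2 / (4 * t)) with ((1-s)^2/t / 4) by (field; lra).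
    replace (s^2 / (4 * t)) with (s^2/t / 4) by (field; lra). lra. }
  rewrite G. apply Rabs_le. split; lra.
Qed.

Lemma sq_le_imp x y : 0 <= y -> x^2 <= y^2 -> x <= y.
Proof. intros Hy H. destruct (Rle_lt_dec x y); auto. nra. Qed.

Definition Ap s P := (3 + P/2)/6 + ((1-s)^3 + (-s)^3)/6 + (1-2*s)/4.
Definition Bp s P := (3 + P/2)/6 + ((1-s)^2 + s^2)/2.

Lemma final_ineq s t P a b : -1/2 <= s < 0 -> 1 <= t -> 0 < P <= 4 ->
  Rabs a <= Ap s P / t -> Rabs b <= Bp s P / t ->
  sqrt ((1/2 - s + a)^2 + (P/4 + b)^2) <= P/4 + (1 - 2*s)/2 + (18 * s^2 - 18 * s + 19) / (12 * t).
Proof.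
  intros Hs Ht HP Ha Hb.
  set (r := / t). assert (Hr : 0 < r <= 1).
  { unfold r. split; [apply Rinv_0_lt_compat; lra|].
    replace 1 with (/ 1) by field. apply Rinv_le_contravar; lra. }
  set (A := Ap s P) in *. set (B := Bp s P) in *.
  assert (HA : 0 <= A) by (unfold A, Ap; nra).
  assert (HB' : (3/4) * A <= B) by (unfold A, B, Ap, Bp; nra).
  replace (A / t) with (A * r) in Ha by (unfold r; field; lra).
  replace (B / t) with (B * r) in Hb by (unfold r; field; lra).
  replace ((18 * s^2 - 18 * s + 19) / (12 * t)) with ((18 * s^2 - 18 * s + 19) / 12 * r) by (unfold r; field; lra).
  set (c := (18 * s^2 - 18 * s + 19) / 12).
  set (u := 1/2 - s). set (v := P / 4).
  replace ((1 - 2*s)/2) with u by (unfold u; field).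
  set (Qc := B + A / 2).
  assert (Ha2 : a^2 <= (A * r)^2).
  { rewrite <- pow2_abs. assert (0 <= Rabs a) by apply Rabs_pos. nra. }
  assert (Hb2 : b^2 <= (B * r)^2).
  { rewrite <- pow2_abs. assert (0 <= Rabs b) by apply Rabs_pos. nra. }
  assert (HQ : A^2 + B^2 <= Qc^2) by (unfold Qc; nra).
  assert (Hab : a^2 + b^2 <= (Qc * r)^2).
  { replace ((Qc * r)^2) with (Qc^2 * r^2) by ring.
    replace ((A * r)^2) with (A^2 * r^2) in Ha2 by ring.
    replace ((B * r)^2) with (B^2 * r^2) in Hb2 by ring.
    assert (0 <= r^2) by nra. nra. }
  set (p := sqrt (u^2 + v^2)).
  assert (Hp0 : 0 <= p) by apply sqrt_pos.
  assert (Hp2 : p^2 = u^2 + v^2).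
  { unfold p. rewrite <- Rsqr_pow2, Rsqr_sqrt; [ring|]. nra. }
  assert (HQc : 0 <= Qc) by (unfold Qc; nra).
  assert (HCS : u * a + v * b <= p * (Qc * r)).
  { assert (Hy0 : 0 <= p * (Qc * r)) by (apply Rmult_le_pos; [lra| nra]).
    destruct (Rle_lt_dec 0 (u * a + v * b)) as [Hpos|Hneg]; [|lra].
    apply sq_le_imp; auto.
    replace ((p * (Qc * r))^2) with (p^2 * (Qc * r)^2) by ring. rewrite Hp2.
    assert (L : (u * a + v * b)^2 <= (u^2 + v^2) * (a^2 + b^2)).
    { assert (0 <= (u * b - v * a)^2) by apply pow2_ge_0. nra. }
    assert (0 <= u^2 + v^2) by nra. nra. }
  assert (EW : u + v + c - Qc = 5/8 + P/8 - s + s^2/4 + s^3/6).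
  { unfold u, v, c, Qc, A, B, Ap, Bp. field. }
  assert (HW0 : 5/8 + P/8 - s <= u + v + c - Qc).
  { rewrite EW. assert (0 <= s^2 * (1/4 + s/6)) by (apply Rmult_le_pos; nra). nra. }
  assert (HpW : p <= u + v + c - Qc).
  { apply sq_le_imp; [lra|]. rewrite Hp2.
    assert (Hk : u^2 + v^2 <= (5/8 + P/8 - s)^2).
    { unfold u, v. nra. }
    assert (0 <= 5/8 + P/8 - s) by lra. nra. }
  assert (Hu0 : 0 <= u) by (unfold u; lra). assert (Hv0 : 0 <= v) by (unfold v; lra).
  assert (Hpuv : p <= u + v).
  { apply sq_le_imp; [lra|]. rewrite Hp2. nra. }
  assert (Hc0 : 0 <= c) by (unfold c; nra).
  assert (Hfin : p + Qc * r <= u + v + c * r).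
  { destruct (Rle_lt_dec Qc c).
    - assert (Qc * r <= c * r) by (apply Rmult_le_compat_r; lra). lra.
    - assert ((Qc - c) * r <= Qc - c) by nra. lra. }
  assert (HX : (u + a)^2 + (v + b)^2 <= (u + v + c * r)^2).
  { assert (E : (u + a)^2 + (v + b)^2 = p^2 + 2 * (u * a + v * b) + (a^2 + b^2)) by (rewrite Hp2; ring).
    rewrite E.
    assert (0 <= p + Qc * r) by nra.
    assert ((p + Qc * r)^2 <= (u + v + c * r)^2) by nra.
    nra. }
  assert (HY : 0 <= u + v + c * r) by nra.
  apply Rle_trans with (sqrt ((u + v + c * r)^2)).
  - apply sqrt_le_1_alt. lra.
  - rewrite sqrt_pow2 by lra. lra.
Qed.


Lemma point_polar_up x b : 0 < b -> ((x, b) : C) = polar (sqrt (x^2 + b^2)) (PI / 2 - atan (x / b)).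
Proof.
  intros Hb. unfold polar. rewrite cos_shift, sin_shift, cos_atan, sin_atan. unfold Rsqr.
  set (c := 1 + x / b * (x / b)).
  assert (Hc : 0 < c) by (unfold c; nra).
  assert (E : sqrt (x^2 + b^2) = b * sqrt c).
  { replace (x^2 + b^2) with (b^2 * c) by (unfold c; field; lra).
    rewrite sqrt_mult_alt by nra. rewrite <- Rsqr_pow2, sqrt_Rsqr; lra. }
  rewrite E. assert (0 < sqrt c) by (apply sqrt_lt_R0; lra).
  f_equal; field; lra.
Qed.

Lemma polar_ext r1 r2 a1 a2 : r1 = r2 -> a1 = a2 -> polar r1 a1 = polar r2 a2.
Proof. intros -> ->. reflexivity. Qed.

Lemma ln_Rpower x y : 0 < x -> ln (Rpower x y) = y * ln x.
Proof. intros Hx. unfold Rpower. apply ln_exp. Qed.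

Lemma Rpower_pos' x y : 0 < Rpower x y.
Proof. unfold Rpower. apply exp_pos. Qed.

Lemma PI_le_4' : PI <= 4.
Proof. apply PI_4. Qed.

Theorem lemma3p10 (sigma t : R) :
  -1/2 <= sigma < 0 -> 1 <= t ->
  let s : C := (sigma, t) in
  exists E : C,
    Cmod E <= PI / 4 + (1 - 2 * sigma) / 2
              + (18 * sigma ^ 2 - 18 * sigma + 19) / (12 * t) /\
    Cmult (Cexp (Cmult (Cminus s (RtoC (1/2))) (RtoC (ln PI))))
          (Cdiv (CGamma (Cdiv (Cminus (RtoC 1) s) (RtoC 2)))
                (CGamma (Cdiv s (RtoC 2))))
    = Cmult (RtoC (Rpower (((1 - sigma) ^ 2 + t ^ 2) / 4) (- sigma / 4)
                   * Rpower ((sigma ^ 2 + t ^ 2) / 4) ((1 - sigma) / 4)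
                   * Rpower PI (sigma - 1/2)))
            (Cexp (Cplus (Cplus (RtoC (sigma - 1/2))
                                (Cmult Ci (RtoC (t * (- ln t + ln (2 * PI) + 1)))))
                         E)).
Proof.
  intros Hs Ht s.
  assert (Ez : Cdiv s (RtoC 2) = ((sigma/2, t/2) : C)).
  { unfold s, Cdiv, Cinv, Cmult, RtoC; simpl. f_equal; field. }
  assert (Ew : Cdiv (Cminus (RtoC 1) s) (RtoC 2) = (((1-sigma)/2, -(t/2)) : C)).
  { unfold s, Cdiv, Cinv, Cmult, Cminus, Cplus, Copp, RtoC; simpl. f_equal; field. }
  rewrite Ez, Ew.
  set (thz := PI/2 - atan (sigma/t)).
  set (thw := atan ((-(t/2)) / ((1-sigma)/2))).
  assert (Pz : ((sigma/2, t/2) : C) = polar (sqrt ((sigma/2)^2 + (t/2)^2)) thz).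
  { unfold thz. replace (sigma / t) with ((sigma/2) / (t/2)) by (field; lra).
    apply point_polar_up. lra. }
  assert (Pw : (((1-sigma)/2, -(t/2)) : C) = polar (sqrt (((1-sigma)/2)^2 + (-(t/2))^2)) thw).
  { apply point_polar. lra. }
  destruct (LM_conv (sigma/2) (t/2)) as [Lz1 [HLz1 [Cz1 BLz1]]]; [lra|lra|].
  destruct (ANG_conv (sigma/2) (t/2) thz) as [Lz2 [HLz2 [Cz2 BLz2]]]; [lra|].
  destruct (LM_conv ((1-sigma)/2) (-(t/2))) as [Lw1 [HLw1 [Cw1 BLw1]]]; [lra|lra|].
  destruct (ANG_conv ((1-sigma)/2) (-(t/2)) thw) as [Lw2 [HLw2 [Cw2 BLw2]]]; [lra|].
  rewrite (CGamma_eq _ _ (is_Gamma_polar (sigma/2) (t/2) thz Lz1 Lz2 ltac:(lra) ltac:(lra) Pz HLz1 HLz2)).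
  rewrite (CGamma_eq _ _ (is_Gamma_polar ((1-sigma)/2) (-(t/2)) thw Lw1 Lw2 ltac:(lra) ltac:(lra) Pw HLw1 HLw2)).
  assert (MM := main_mod sigma t Lz1 Lw1 Cz1 Cw1 Ht Hs BLz1 BLw1).
  assert (MA := main_arg sigma t Lz2 Lw2 Cz2 Cw2 Ht Hs BLz2 BLw2).
  set (A' := ((1 - sigma)^2 + t^2)/4). set (B' := (sigma^2 + t^2)/4).
  set (R0 := Rpower A' (-sigma/4) * Rpower B' ((1-sigma)/4) * Rpower PI (sigma - 1/2)).
  assert (HR0 : 0 < R0).
  { unfold R0. repeat apply Rmult_lt_0_compat; apply Rpower_pos'. }
  set (T := t * (- ln t + ln (2 * PI) + 1)).
  set (e1 := (sigma - 1/2) * ln PI + Lw1 - Lz1 - ln R0 - (sigma - 1/2)).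
  set (e2 := t * ln PI + (Lw2 - Lz2) - T).
  exists ((e1, e2) : C). split.
  - assert (HPI : 0 < PI <= 4) by (split; [apply PI_RGT_0 | apply PI_4]).
    assert (It : / t^2 <= / t).
    { apply Rinv_le_contravar; nra. }
    assert (It0 : 0 < / t^2) by (apply Rinv_0_lt_compat; nra).
    assert (LA : ln A' = ln (t^2 + (1-sigma)^2) - 2 * ln 2).
    { unfold A'. replace ((1 - sigma)^2 + t^2) with (t^2 + (1-sigma)^2) by ring.
      rewrite ln_div by nra. replace 4 with (2*2) by ring. rewrite ln_mult by lra. ring. }
    assert (LB : ln B' = ln (t^2 + sigma^2) - 2 * ln 2).
    { unfold B'. replace (sigma^2 + t^2) with (t^2 + sigma^2) by ring.
      rewrite ln_div by nra. replace 4 with (2*2) by ring. rewrite ln_mult by lra. ring. }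
    assert (LR0 : ln R0 = (-sigma/4) * ln A' + ((1-sigma)/4) * ln B' + (sigma - 1/2) * ln PI).
    { unfold R0. rewrite !ln_mult by (try apply Rmult_lt_0_compat; apply Rpower_pos').
      rewrite !ln_Rpower by (try apply PI_RGT_0; unfold A', B'; nra). ring. }
    assert (PPm : PP t (-sigma) = (-sigma) * ln (t^2 + sigma^2) + 2*sigma + 2*t*atan((-sigma)/t)).
    { unfold PP. replace ((-sigma)^2) with (sigma^2) by ring. ring. }
    assert (PPs : PP t (sigma - 1) = (sigma - 1) * ln (t^2 + (1-sigma)^2) - 2*(sigma-1) - 2*t*atan((1-sigma)/t)).
    { unfold PP. replace ((sigma-1)^2) with ((1-sigma)^2) by ring.
      replace ((sigma - 1)/t) with (- ((1-sigma)/t)) by (field; lra). rewrite atan_opp. ring. }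
    assert (QQm : QQ t (-sigma) = (-sigma) * atan ((-sigma)/t) - t/2 * ln (t^2 + sigma^2)).
    { unfold QQ. replace ((-sigma)^2) with (sigma^2) by ring. ring. }
    assert (QQs : QQ t (sigma - 1) = (1 - sigma) * atan ((1-sigma)/t) - t/2 * ln (t^2 + (1-sigma)^2)).
    { unfold QQ. replace ((sigma-1)^2) with ((1-sigma)^2) by ring.
      replace ((sigma - 1)/t) with (- ((1-sigma)/t)) by (field; lra). rewrite atan_opp. ring. }
    assert (Ida : e1 - (1/2 - sigma) =
       (Lw1 - Lz1 - ((sigma - 1/2) * ln 2 + (PP t (- sigma) - PP t (sigma - 1)) / 4))
       + (sigma - 1/2 + t / 2 * (atan ((1 - sigma) / t) + atan ((- sigma) / t)))
       + (ln (t^2 + (1 - sigma)^2) - ln (t^2 + sigma^2)) / 4).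
    { unfold e1. rewrite LR0, LA, LB, PPm, PPs. field. }
    assert (Idb : e2 - PI/4 =
       (Lw2 - Lz2 - (PI / 4 + t + t * ln 2 + (QQ t (sigma - 1) + QQ t (- sigma)) / 2))
       + ((((1 - sigma) * atan ((1 - sigma) / t) + (- sigma) * atan ((- sigma) / t)) / 2
          - t / 4 * (ln (t^2 + (1 - sigma)^2) - 2 * ln t) - t / 4 * (ln (t^2 + sigma^2) - 2 * ln t)))).
    { unfold e2, T. rewrite ln_mult by lra. rewrite QQm, QQs. field. }
    assert (D1 := D1_bound sigma t Ht Hs). assert (D2 := D2_bound sigma t Ht Hs).
    assert (XY := XY_bound sigma t Ht Hs).
    assert (Ha : Rabs (e1 - (1/2 - sigma)) <= Ap sigma PI / t).
    { rewrite Ida.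
      eapply Rle_trans; [apply Rabs_triang|].
      eapply Rle_trans; [apply Rplus_le_compat_r, Rabs_triang|].
      rewrite (Rabs_pos_eq ((ln (t^2 + (1 - sigma)^2) - ln (t^2 + sigma^2)) / 4)) by lra.
      rewrite (Rabs_left1 (sigma - 1/2 + t / 2 * (atan ((1 - sigma) / t) + atan ((- sigma) / t)))) by lra.
      assert (E1 : (3 / t^2 + PI / (2 * t)) / 6 <= (3 + PI / 2) / 6 / t).
      { replace ((3 / t^2 + PI / (2 * t)) / 6) with (/ t^2 / 2 + PI / 12 * / t) by (field; lra).
        replace ((3 + PI / 2) / 6 / t) with (/ t / 2 + PI / 12 * / t) by (field; lra). lra. }
      assert (Hc3 : 0 <= ((1 - sigma)^3 + (- sigma)^3)) by nra.
      assert (E2 : ((1 - sigma)^3 + (- sigma)^3) / (6 * t^2) <= ((1 - sigma)^3 + (- sigma)^3) / 6 / t).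
      { replace (((1 - sigma)^3 + (- sigma)^3) / (6 * t^2)) with (((1 - sigma)^3 + (- sigma)^3) / 6 * / t^2) by (field; lra).
        apply Rmult_le_compat_l; lra. }
      assert (E3 : (1 - 2 * sigma) / (4 * t^2) <= (1 - 2 * sigma) / 4 / t).
      { replace ((1 - 2 * sigma) / (4 * t^2)) with ((1 - 2 * sigma) / 4 * / t^2) by (field; lra).
        apply Rmult_le_compat_l; lra. }
      assert (EA : Ap sigma PI / t = (3 + PI / 2) / 6 / t + ((1 - sigma)^3 + (- sigma)^3) / 6 / t + (1 - 2 * sigma) / 4 / t).
      { unfold Ap. field. lra. }
      rewrite EA. lra. }
    assert (Hb : Rabs (e2 - PI/4) <= Bp sigma PI / t).
    { rewrite Idb.
      eapply Rle_trans; [apply Rabs_triang|].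
      assert (E1 : (3 / t^2 + PI / (2 * t)) / 6 <= (3 + PI / 2) / 6 / t).
      { replace ((3 / t^2 + PI / (2 * t)) / 6) with (/ t^2 / 2 + PI / 12 * / t) by (field; lra).
        replace ((3 + PI / 2) / 6 / t) with (/ t / 2 + PI / 12 * / t) by (field; lra). lra. }
      assert (EB : Bp sigma PI / t = (3 + PI / 2) / 6 / t + ((1 - sigma)^2 + sigma^2) / (2 * t)).
      { unfold Bp. field. lra. }
      rewrite EB. lra. }
    assert (FI := final_ineq sigma t PI (e1 - (1/2 - sigma)) (e2 - PI/4) Hs Ht HPI Ha Hb).
    replace (1/2 - sigma + (e1 - (1/2 - sigma))) with e1 in FI by ring.
    replace (PI/4 + (e2 - PI/4)) with e2 in FI by ring.
    change (Cmod (e1, e2)) with (sqrt (e1^2 + e2^2)). exact FI.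
  - assert (EL : Cexp (Cmult (Cminus s (RtoC (1/2))) (RtoC (ln PI)))
                 = polar (exp ((sigma - 1/2) * ln PI)) (t * ln PI)).
    { unfold s, Cmult, Cminus, Cplus, Copp, RtoC; simpl. rewrite Cexp_polar.
      f_equal; [f_equal|]; ring. }
    assert (ER : Cexp (Cplus (Cplus (RtoC (sigma - 1/2)) (Cmult Ci (RtoC T))) (e1, e2))
                 = polar (exp (sigma - 1/2 + e1)) (T + e2)).
    { unfold Ci, Cmult, Cplus, RtoC; simpl. rewrite Cexp_polar.
      f_equal; [f_equal|]; ring. }
    fold T. rewrite EL, ER, polar_div by apply exp_pos.
    rewrite RtoC_polar, !polar_mult.
    apply polar_ext; [|unfold e2; ring].
    unfold e1. replace (sigma - 1 / 2 + ((sigma - 1 / 2) * ln PI + Lw1 - Lz1 - ln R0 - (sigma - 1 / 2)))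
      with ((sigma - 1/2) * ln PI + Lw1 + (- Lz1) + (- ln R0)) by ring.
    rewrite !exp_plus, !exp_Ropp, exp_ln by auto.
    field. split; [lra | apply Rgt_not_eq, exp_pos].
Qed.
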